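(* If $\partial\psi\left(C\right)=E^*$ or $C$ is compact, then $\forall a\in C$, the strategy $S\textup{-II}$ (which is Optimistic-MD) enjoys the following dynamic regret upper bound, \begin{equation*} \begin{aligned} \mathrm{Regret}\left(z_1,z_2,\cdots,z_T\right) \leqslant\ &\sum_{t=1}^{T}\frac{1}{\theta_t}\left[B_{\psi}\left(z_t, \widetilde{x}_{t}^\psi\right)-B_{\psi}\left(z_t, \check{x}_{t+1}^\psi\right)\right] \\ &+\sum_{t=1}^{T}\frac{1}{\theta_t}\phi^\star\left(\theta_t\left\lVert x_t^*-\widehat{x}_t^*\right\rVert\right) -\sum_{t=1}^{T}\frac{1}{\theta_t}B_{\psi}\left(x_{t}, \widetilde{x}_{t}^\psi\right), \quad\forall z_t\in C. \end{aligned} \end{equation*}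
   Context: $E$ is a normed vector space over $\mathbb{R}$ with dual $E^*$ and duality pairing $\langle\cdot,\cdot\rangle$; $\star$ denotes the Fenchel conjugate. For a proper function $\psi$, the generalized Bregman divergence is $B_\psi(x,y^* )=\psi(x)+\psi^\star(y^* )-\langle y^*,x\rangle$, and $\partial\psi(x)=\{x^*\in E^*: B_\psi(x,x^* )=0\}$; $\operatorname{gra}$ denotes the graph of a (multivalued) map. $\psi$ is $\phi$-convex if $B_\psi(x,y^* )\geqslant\phi(\lVert x-y\rVert)$ for all $x\in E$ and all $(y,y^* )\in\operatorname{gra}\partial\psi$, where $\phi$ is convex, $\phi\geqslant0$, $\phi(0)=0$. Online setting: $C\neq\varnothing$ is a closed convex subset of $E$; at round $t$ the learner picks $x_t\in C$ and the adversary returns a loss $\varphi_t$ with $\operatorname{dom}\partial\varphi_t\supset C$; $x_t^*\in\partial\varphi_t(x_t)$; $\mathrm{Regret}(z_1,\dots,z_T)=\sum_{t=1}^T\varphi_t(x_t)-\sum_{t=1}^T\varphi_t(z_t)$. Strategy $S\textup{-II}$: $\psi\colon C\to\mathbb{R}$ is $\phi$-convex, $(a,a^\psi)\in\operatorname{gra}\partial\psi$, parameters $\theta_t>0$, estimates $\widehat{x}_t^*\in E^*$ of $x_t^*$; updates $\check{x}_t^\psi=\widetilde{x}_{t-1}^\psi-\theta_{t-1}x_{t-1}^*$, $\widetilde{x}_t\in\partial\psi^\star(\check{x}_t^\psi)$, $\widetilde{x}_t^\psi\in\partial\psi(\widetilde{x}_t)$, $\widetilde{x}_1^\psi=a^\psi$,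 and $x_t\in\partial\psi^\star(\widetilde{x}_t^\psi-\theta_t\widehat{x}_t^* )$. *)

(* Defs.v *)
From mathcomp Require Import all_boot all_order all_algebra.
From mathcomp Require Import all_classical all_reals all_analysis.
Import Order.TTheory GRing.Theory Num.Theory.
Import numFieldNormedType.Exports.

Set Implicit Arguments.
Unset Strict Implicit.
Unset Printing Implicit Defensive.

Local Open Scope classical_set_scope.
Local Open Scope ring_scope.

Section Defs.
Context {R : realType} {E : normedModType R}.

(* Elements of the dual E^star : continuous linear functionals E -> R.
   The duality pairing <f, x> is just f x. *)
Definition dual_elt (f : E -> R) : Prop :=
  (forall (a : R) (x y : E), f (a *: x + y) = a * f x + f y) /\ continuous f.

Definition dual_norm (f : E -> R) : R :=
  sup ((fun x => `|f x|) @` [set x : E | `|x| <= 1]).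

(* Fenchel conjugate of psi : C -> R (psi = +oo outside C), evaluated at y in E^star *)
Definition fconj (C : set E) (psi : E -> R) (y : E -> R) : \bar R :=
  ereal_sup ((fun x => (y x - psi x)%:E) @` C).

Definition bregman (C : set E) (psi : E -> R) (x : E) (y : E -> R) : \bar R :=
  ((psi x)%:E + fconj C psi y - (y x)%:E)%E.

Definition subdiff (C : set E) (psi : E -> R) (x : E) : set (E -> R) :=
  [set y | C x /\ dual_elt y /\ bregman C psi x y = 0%E].

(* subdifferential of the conjugate, as the inverse of subdiff:
   x in d psi^star(y^star)  <->  y^star in d psi(x) *)
Definition subdiff_conj (C : set E) (psi : E -> R) (y : E -> R) : set E :=
  [set x | subdiff C psi x y].

Definition eproper (g : E -> \bar R) : Prop :=
  (forall x, g x != -oo%E) /\ (exists x, g x != +oo%E).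

Definition econj (g : E -> \bar R) (y : E -> R) : \bar R :=
  ereal_sup ((fun x => ((y x)%:E - g x)%E) @` [set: E]).

Definition ebregman (g : E -> \bar R) (x : E) (y : E -> R) : \bar R :=
  (g x + econj g y - (y x)%:E)%E.

Definition esubdiff (g : E -> \bar R) (x : E) : set (E -> R) :=
  [set y | dual_elt y /\ ebregman g x y = 0%E].

Definition phi_conj (phi : R -> R) (s : R) : \bar R :=
  ereal_sup ((fun t => (s * t - phi t)%:E) @` [set t : R | 0 <= t]).

Definition admissible_phi (phi : R -> R) : Prop :=
  [/\ forall s t l : R, 0 <= s -> 0 <= t -> 0 <= l <= 1 ->
        phi (l * s + (1 - l) * t) <= l * phi s + (1 - l) * phi t,
      forall t : R, 0 <= t -> 0 <= phi t
    & phi 0 = 0].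

Definition phi_convex (C : set E) (psi : E -> R) (phi : R -> R) : Prop :=
  forall x, C x -> forall y ys, subdiff C psi y ys ->
    ((phi `|x - y|)%:E <= bregman C psi x ys)%E.

Definition convex_subset (C : set E) : Prop :=
  forall x y (l : R), C x -> C y -> 0 <= l <= 1 -> C (l *: x + (1 - l) *: y).

End Defs.

(* Main.v *)
Require Import Defs.
From mathcomp Require Import all_boot all_order all_algebra.
From mathcomp Require Import all_classical all_reals all_analysis.
From mathcomp Require Import ring lra zify.
Import Order.TTheory GRing.Theory Num.Theory.
Import numFieldNormedType.Exports.
Local Open Scope classical_set_scope.
Local Open Scope ring_scope.


Set Implicit Arguments.
Section H.
Context {R : realType} {E : normedModType R}.

Lemma dual0 (f : E -> R) : dual_elt f -> f 0 = 0.
Proof.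
move=> [L _]; have := L 1 0 0; rewrite scale1r addr0 mul1r => /eqP.
move=> /eqP H; lra. Qed.

Lemma dualZ (f : E -> R) a v : dual_elt f -> f (a *: v) = a * f v.
Proof. move=> df; have := df.1 a v 0; by rewrite addr0 dual0 // addr0. Qed.

Lemma dualB (f : E -> R) u v : dual_elt f -> f (u - v) = f u - f v.
Proof.
move=> df; have := df.1 (-1) v u; rewrite scaleN1r addrC => ->.
by rewrite mulN1r addrC.
Qed.

Lemma dual_ub (f : E -> R) : dual_elt f ->
  exists M, forall v, `|v| <= 1 -> `|f v| <= M.
Proof.
move=> df; have := df.2 0 => /cvgr_dist_lt/(_ 1 ltr01).
move=> /nbhs_ballP [d /= d0 Hd].
rewrite dual0 // in Hd.
exists (2 / d) => v v1.
have : ball 0 d ((d / 2) *: v).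
  rewrite -ball_normE /= sub0r normrN normrZ gtr0_norm ?divr_gt0 //.
  have h2 : d / 2 < d by rewrite ltr_pdivrMr // ltr_pMr // ltr1n.
  apply: (le_lt_trans _ h2); rewrite -[leRHS]mulr1; apply: ler_wpM2l => //.
  by rewrite divr_ge0 // ltW.
move=> /Hd; rewrite sub0r normrN dualZ // normrM gtr0_norm ?divr_gt0 // => H.
rewrite -(ler_pM2l (_ : 0 < d / 2)) ?divr_gt0 //.
apply: ltW; apply: (lt_le_trans H).
have dn : d != 0 by rewrite gt_eqF. have -> : d / 2 * (2 / d) = 1 by field. by []. Qed.

Lemma dual_norm_le (f : E -> R) v : dual_elt f -> `|f v| <= dual_norm f * `|v|.
Proof.
move=> df; have [M HM] := dual_ub df.
have hs : has_sup ((fun x => `|f x|) @` [set x : E | `|x| <= 1]).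
  split; first by exists `|f 0|, 0 => //=; rewrite normr0 ler01.
  by exists M => _ [y /= y1 <-]; exact: HM.
have ub := ub_le_sup hs.2.
have [->|v0] := eqVneq v 0.
  by rewrite dual0 // !normr0 mulr0.
have nv : 0 < `|v| by rewrite normr_gt0.
have hv : [set x : E | `|x| <= 1] (`|v|^-1 *: v).
  by rewrite /= normrZ normfV normr_id mulVf ?gt_eqF.
have := ub _ (ex_intro2 _ _ _ hv erefl).
rewrite /= dualZ // normrM normfV normr_id.
by rewrite ler_pdivrMl // mulrC.
Qed.

Lemma dual_subZ (f g : E -> R) (c : R) : dual_elt f -> dual_elt g ->
  dual_elt (f - c *: g).
Proof.
move=> df dg; split.
  move=> a u v; have sc : forall x y : R, x *: y = x * y by []. rewrite !fctE df.1 dg.1 /= !sc; ring.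
move=> u; apply: continuousB; first exact: df.2.
exact: (continuousZ (s := fun=> c) (cvg_cst _) (dg.2 u)).
Qed.

Lemma dual_sub (f g : E -> R) : dual_elt f -> dual_elt g -> dual_elt (f - g).
Proof.
move=> df dg; have := dual_subZ 1 df dg.
by have -> : (1 : R) *: g = g by apply/funext => u /=; rewrite scale1r.
Qed.

Lemma subdiff_fconj (C : set E) psi u y : subdiff C psi u y ->
  fconj C psi y = (y u - psi u)%:E.
Proof.
move=> [_ [_]]; rewrite /bregman; case: (fconj C psi y) => [r||] //=.
by move=> [] H; congr EFin; lra.
Qed.

Lemma loss_le (g : E -> \bar R) (u z : E) (s : E -> R) :
  eproper g -> esubdiff g u s -> (g u - g z <= (s u - s z)%:E)%E.
Proof.
move=> [gN [x0 gx0]] [_]; rewrite /ebregman.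
have ubz : ((s z)%:E - g z <= econj g s)%E.
  by apply: ereal_sup_ubound; exists z.
have ub0 : ((s x0)%:E - g x0 <= econj g s)%E.
  by apply: ereal_sup_ubound; exists x0.
move: ubz ub0 (gN z) (gN u) gx0 (gN x0).
case: (econj g s) => [e||]; case: (g u) => [gu||]; case: (g z) => [gz||];
  case: (g x0) => [g0||] //=; rewrite ?leey ?leeNy ?lee_fin //=.
all: try (move=> *; discriminate).
all: try (by move=> *; rewrite ?leNye).
move=> h1 _ _ _ _ _ [] h2; lra.
Qed.

Lemma phi_conj_ge0 (phi : R -> R) (s : R) : admissible_phi phi -> (0 <= phi_conj phi s)%E.
Proof.
move=> [_ _ p0]; apply: ereal_sup_ubound; exists 0 => //=.
by rewrite p0 mulr0 subr0.
Qed.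

Lemma key (C : set E) (psi : E -> R) (phi : R -> R) (x : E) (g h s : E -> R) (th : R) :
  admissible_phi phi -> phi_convex C psi phi -> 0 < th ->
  dual_elt s -> dual_elt h ->
  subdiff C psi x (g - th *: h) ->
  (fconj C psi (g - th *: s)%R <=
    phi_conj phi (th * dual_norm (s - h)%R)%R + (((g - th *: s) x - psi x)%R)%:E)%E.
Proof.
move=> adm pc th0 ds dh sd.
have sc : forall a b : R, a *: b = a * b by [].
apply: ge_ereal_sup => _ [u Cu <-].
have := pc u Cu x _ sd; rewrite /bregman (subdiff_fconj sd) -EFinD lee_fin.
rewrite !fctE !sc => H1.
have H2 : (((th * dual_norm (s - h) * `|u - x| - phi `|u - x|)%R)%:E <=
    phi_conj phi (th * dual_norm (s - h))%R)%E.
  by apply: ereal_sup_ubound; exists `|u - x| => //=; rewrite normr_ge0.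
apply: le_trans (leeD2r _ H2).
rewrite -EFinD lee_fin.
have H3 := dual_norm_le (x - u) (dual_sub ds dh).
have e : (s - h)%R (x - u) = s x - h x - (s u - h u).
  by rewrite dualB //; apply: dual_sub.
rewrite e (distrC x u) in H3.
have H4 := ler_wpM2l (ltW th0) (le_trans (ler_norm _) H3).
rewrite mulrA in H4. lra.
Qed.

Lemma fconj_fin (C : set E) (psi : E -> R) (phi : R -> R) a apsi (y : E -> R) :
  admissible_phi phi -> phi_convex C psi phi -> subdiff C psi a apsi ->
  ((forall y, dual_elt y -> exists2 w, C w & subdiff C psi w y) \/ compact C) ->
  dual_elt y -> fconj C psi y \is a fin_num.
Proof.
move=> adm pc sd [H|cpt] dy.
  by have [w _ /subdiff_fconj ->] := H y dy.
have dap : dual_elt apsi := sd.2.1.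
have df := dual_sub dy dap.
have := continuous_compact (continuous_subspaceT (A:=C) df.2) cpt.
move=> /compact_bounded /pinfty_ex_gt0 [M M0 HM].
have ub : (fconj C psi y <= (M + (apsi a - psi a))%:E)%E.
  apply: ge_ereal_sup => _ [u Cu <-]; rewrite lee_fin.
  have := pc u Cu a _ sd; rewrite /bregman (subdiff_fconj sd) -EFinD lee_fin.
  have := (let: And3 _ a2 _ := adm in a2) `|u - a| (normr_ge0 _).
  have : `|(y - apsi) u| <= M by apply: HM; exists u.
  rewrite !fctE => /(le_trans (ler_norm _)) => *; lra.
have lb : ((y a - psi a)%:E <= fconj C psi y)%E.
  by apply: ereal_sup_ubound; exists a => //; case: sd.
by move: ub lb; case: (fconj C psi y).
Qed.

Lemma core (C : set E) (psi : E -> R) (phi : R -> R) (g h s : E -> R) (x z : E)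
  (th : R) (Lx Lz : \bar R) :
  admissible_phi phi -> phi_convex C psi phi -> 0 < th ->
  dual_elt s -> dual_elt h -> subdiff C psi x (g - th *: h) ->
  fconj C psi g \is a fin_num -> fconj C psi (g - th *: s) \is a fin_num ->
  (Lx - Lz <= ((s x - s z)%R)%:E)%E ->
  [/\ ((th^-1)%:E * (bregman C psi z g - bregman C psi z (g - th *: s)%R))%E \is a fin_num,
      ((th^-1)%:E * bregman C psi x g)%E \is a fin_num &
      (Lx - Lz <= (th^-1)%:E * (bregman C psi z g - bregman C psi z (g - th *: s)%R)
        + (th^-1)%:E * phi_conj phi (th * dual_norm (s - h)%R)%R
        - (th^-1)%:E * bregman C psi x g)%E].
Proof.
move=> adm pc th0 ds dh sd fg fc hL.
have K := key adm pc th0 ds dh sd.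
have sc : forall a b : R, a *: b = a * b by [].
move: K; rewrite /bregman -(fineK fg) -(fineK fc).
set Pc := fine _; set Pg := fine _.
have P0 := phi_conj_ge0 (th * dual_norm (s - h)%R) adm.
move: P0; set Phi := phi_conj _ _.
rewrite -!EFinN -!EFinD -!EFinM.
move=> P0 K; split => //.
clearbody Phi; move: hL P0 K; case: Phi => [r||] //= hL P0 K.
  rewrite -!EFinM -!EFinD.
  apply: (le_trans hL); rewrite lee_fin.
  rewrite lee_fin !fctE !sc in K.
  rewrite !fctE !sc.
  have -> : forall X Y : R, th^-1 * X + th^-1 * r - th^-1 * Y = th^-1 * (X + r - Y).
    by move=> X Y; ring.
  rewrite ler_pdivlMl //; lra.
rewrite mulry gtr0_sg ?invr_gt0 // mul1e /=.
by rewrite leey.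
Qed.

Lemma sum_comb (n : nat) (L a b c : nat -> \bar R) :
  (forall t, (1 <= t <= n)%N ->
     [/\ a t \is a fin_num, c t \is a fin_num & (L t <= a t + b t - c t)%E]) ->
  (\sum_(1 <= t < n.+1) L t <= \sum_(1 <= t < n.+1) a t + \sum_(1 <= t < n.+1) b t
     - \sum_(1 <= t < n.+1) c t)%E.
Proof.
move=> H.
have -> : (\sum_(1 <= t < n.+1) a t = \sum_(1 <= t < n.+1) (fine (a t))%:E)%E.
  by apply: eq_big_nat => t ht; rewrite fineK //; case: (H t ht).
have -> : (\sum_(1 <= t < n.+1) c t = \sum_(1 <= t < n.+1) (fine (c t))%:E)%E.
  by apply: eq_big_nat => t ht; rewrite fineK //; case: (H t ht).
rewrite !sumEFin.
have -> : forall (X Y : R) (B : \bar R), (X%:E + B - Y%:E = B + (X - Y)%:E)%E.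
  by move=> X Y [r||] //=; rewrite -!EFinD; congr EFin; ring.
rewrite -GRing.sumrB -sumEFin -big_split /=.
rewrite big_nat_cond [X in (_ <= X)%E]big_nat_cond.
apply: lee_sum => t /andP [ht _].
have [fa fc hL] := H t ht.
rewrite -(fineK fa) -(fineK fc) in hL.
move: (fine (a t)) (fine (c t)) hL => A Cc.
case: (b t) => [r||] hL.
- apply: (le_trans hL); rewrite -?EFinN -!EFinD lee_fin; lra.
- by rewrite leey.
- by move: hL; rewrite /= ?adde_Neq_pinfty /=.
Qed.
End H.
Unset Implicit Arguments.

Theorem proposition1 (R : realType) (E : normedModType R)
  (C : set E) (psi : E -> R) (phi : R -> R)
  (a : E) (apsi : E -> R) (T : nat) (theta : nat -> R)
  (loss : nat -> E -> \bar R)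
  (x : nat -> E) (xs : nat -> E -> R) (xhat : nat -> E -> R)
  (xt : nat -> E) (xtpsi : nat -> E -> R) (xcheck : nat -> E -> R)
  (z : nat -> E) :
  C !=set0 -> closed C -> convex_subset C ->
  admissible_phi phi -> phi_convex C psi phi ->
  ((forall y, dual_elt y -> exists2 w, C w & subdiff C psi w y) \/ compact C) ->
  C a -> subdiff C psi a apsi ->
  (forall t, (1 <= t <= T)%N -> 0 < theta t) ->
  (* the adversary's losses *)
  (forall t, (1 <= t <= T)%N -> eproper (loss t)) ->
  (forall t, (1 <= t <= T)%N -> forall w, C w -> exists ws, esubdiff (loss t) w ws) ->
  (forall t, (1 <= t <= T)%N -> esubdiff (loss t) (x t) (xs t)) ->
  (forall t, (1 <= t <= T)%N -> dual_elt (xhat t)) ->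
  (* strategy S-II *)
  xtpsi 1%N = apsi ->
  (forall t, (2 <= t <= T.+1)%N ->
     xcheck t = xtpsi t.-1 - theta t.-1 *: xs t.-1) ->
  (forall t, (2 <= t <= T)%N -> subdiff_conj C psi (xcheck t) (xt t)) ->
  (forall t, (2 <= t <= T)%N -> subdiff C psi (xt t) (xtpsi t)) ->
  (forall t, (1 <= t <= T)%N ->
     subdiff_conj C psi (xtpsi t - theta t *: xhat t) (x t)) ->
  (* comparators *)
  (forall t, (1 <= t <= T)%N -> C (z t)) ->
  (\sum_(1 <= t < T.+1) (loss t (x t) - loss t (z t))
   <= \sum_(1 <= t < T.+1) ((theta t)^-1)%:E *
          (bregman C psi (z t) (xtpsi t) - bregman C psi (z t) (xcheck t.+1))
    + \sum_(1 <= t < T.+1) ((theta t)^-1)%:E *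
          phi_conj phi ((theta t)%R * dual_norm (xs t - xhat t)%R)
    - \sum_(1 <= t < T.+1) ((theta t)^-1)%:E * bregman C psi (x t) (xtpsi t))%E.
Proof.
move=> C0 Ccl Ccv adm pc disj Ca sda th0 lp lsub xsub xhd x1 hcheck hxt hxtpsi hx hz.
apply: sum_comb => t ht.
have [dg fg] : dual_elt (xtpsi t) /\ fconj C psi (xtpsi t) \is a fin_num.
  case: (ltnP 1 t) => t1.
    have h : subdiff C psi (xt t) (xtpsi t) by apply: hxtpsi; lia.
    by split; [exact: h.2.1 | rewrite (subdiff_fconj h)].
  have -> : t = 1%N by lia.
  by rewrite x1; split; [exact: sda.2.1 | rewrite (subdiff_fconj sda)].
have ds : dual_elt (xs t) := (xsub t ht).1.
have dh := xhd t ht.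
have sdx : subdiff C psi (x t) (xtpsi t - theta t *: xhat t) := hx t ht.
have hc : xcheck t.+1 = xtpsi t - theta t *: xs t by apply: hcheck; lia.
rewrite hc.
have fc := fconj_fin adm pc sda disj (dual_subZ (theta t) dg ds).
exact: core adm pc (th0 t ht) ds dh sdx fg fc (loss_le (z t) (lp t ht) (xsub t ht)).
Qed.
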